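(* In the BTS-RED-Known setting, let $C_2=2/\log(1+\lambda^{-1})$. For every $t\ge1$, $$\sum_{b=1}^{b_t}\sigma_{t-1}(\boldsymbol x^{(b)}_t)\le e^{C}\sqrt{C_2\,b_t\,\mathbb I(f;\boldsymbol y_t\mid\boldsymbol y_{1:t-1})}.$$
   Context: Setting (BTS-RED-Known). $\mathcal X$ is a finite set; $k$ is a squared-exponential kernel on $\mathcal X$ (so $k(\boldsymbol x,\boldsymbol x)=1$); the unknown objective $f:\mathcal X\to\mathbb R$ lies in the RKHS $\mathcal H_k$ with $\|f\|_{\mathcal H_k}\le B$ for a known $B>0$. A known noise variance function $\sigma^2:\mathcal X\to(0,\infty)$ has maximum value $\sigma^2_{\max}$. Querying $\boldsymbol x$ once returns $f(\boldsymbol x)+\epsilon$ with $\epsilon\sim\mathcal N(0,\sigma^2(\boldsymbol x))$, independently across queries. Fix a horizon $T$, a total budget $\mathbb B\in\mathbb N$, an effective noise variance $R^2>0$, $\delta\in(0,1)$, and $\lambda=1+2/T$. GP posterior: given data pairs $(\boldsymbol x_i,y_i)_{i=1}^m$, $\mu(\boldsymbol x)=\boldsymbol k(\boldsymbol x)^\top(\boldsymbol K+\lambda I)^{-1}\boldsymbol y$ and $s^2(\boldsymbol x,\boldsymbol x')=k(\boldsymbol x,\boldsymbol x')-\boldsymbol k(\boldsymbol x)^\top(\boldsymbol K+\lambda I)^{-1}\boldsymbol k(\boldsymbol x')$, with $\boldsymbol k(\boldsymbol x)=(k(\boldsymbol x,\boldsymbol x_i))_i$, $\boldsymbol K=(k(\boldsymbol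 x_i,\boldsymbol x_j))_{ij}$, $\boldsymbol y=(y_i)_i$. $\mu_{t-1}$ and $\sigma^2_{t-1}(\cdot,\cdot)$ denote these quantities computed from all pairs collected in iterations $1,\dots,t-1$, and $\sigma_{t-1}(\boldsymbol x)=\sqrt{\sigma^2_{t-1}(\boldsymbol x,\boldsymbol x)}$. Algorithm: in iteration $t$, for $b=1,2,\dots$: draw $f^{(b)}_t$ (independently, given the past) from the Gaussian process with mean $\mu_{t-1}$ and covariance $\beta_t^2\sigma^2_{t-1}(\cdot,\cdot)$; set $\boldsymbol x^{(b)}_t\in\arg\max_{\boldsymbol x\in\mathcal X}f^{(b)}_t(\boldsymbol x)$ and $n^{(b)}_t=\lceil\sigma^2(\boldsymbol x^{(b)}_t)/R^2\rceil$; stop at the first $b$ with $\sum_{b'\le b}n^{(b')}_t\ge\mathbb B$ and set $b_t=b-1$. Each $\boldsymbol x^{(b)}_t$, $b\in[b_t]=\{1,\dots,b_t\}$, is queried $n^{(b)}_t$ times, the empirical mean $y^{(b)}_t$ of these replicates is recorded, and the pairs $(\boldsymbol x^{(b)}_t,y^{(b)}_t)_{b\in[b_t]}$ are added to the data. $\tau_{t-1}=\sum_{t'=1}^{t-1}b_{t'}$. Information gain: for a finite list of inputs $A$ with (model) observations $\boldsymbol y_A$, $\mathbb I(f;\boldsymbol y_A\mid\boldsymbol y_{1:t-1})=\tfrac12\log\det(I+\lambda^{-1}\Sigma_{t-1}(A))$ with $\Sigma_{t-1}(A)=(\sigma^2_{t-1}(\boldsymbol a,\boldsymbol a'))_{\boldsymbol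 a,\boldsymbol a'\in A}$, where $\boldsymbol y_{1:t-1}$ denotes all observations of iterations $1,\dots,t-1$ and $\boldsymbol y_t$ denotes the observations at the batch $\boldsymbol x^{(1)}_t,\dots,\boldsymbol x^{(b_t)}_t$. $C$ is a constant such that $\max_{A\subset\mathcal X,|A|\le\mathbb B}\mathbb I(f;\boldsymbol y_A\mid\boldsymbol y_{1:t-1})\le C$ for all $t\ge1$. *)

(* Defs.v *)
From HB Require Import structures.
From mathcomp Require Import all_boot all_order all_algebra.
From mathcomp Require Import reals sequences exp.
Set Implicit Arguments. Unset Strict Implicit. Unset Printing Implicit Defensive.
Import Order.TTheory GRing.Theory Num.Theory.
Local Open Scope ring_scope.

Section BTSRED.
Variables (R : realType) (X : finType).

Definition se_kernel (d : nat) (emb : X -> 'rV[R]_d) (ell : R) (x x' : X) : R :=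
  expR (- (\sum_(i < d) (emb x 0 i - emb x' 0 i) ^+ 2) / (2 * ell ^+ 2)).

Variables (k : X -> X -> R) (lam : R).

Definition gram (D : seq X) : 'M[R]_(size D) :=
  \matrix_(i, j) k (tnth (in_tuple D) i) (tnth (in_tuple D) j).

Definition post_cov (D : seq X) (x x' : X) : R :=
  k x x' - (\row_i k x (tnth (in_tuple D) i)
             *m invmx (gram D + lam%:M)
             *m \col_j k (tnth (in_tuple D) j) x') 0 0.

Definition post_sd (D : seq X) (x : X) : R := Num.sqrt (post_cov D x x).

Definition post_cov_mx (D A : seq X) : 'M[R]_(size A) :=
  \matrix_(i, j) post_cov D (tnth (in_tuple A) i) (tnth (in_tuple A) j).

(* I(f; y_A | data at D) = 1/2 log det(I + lam^-1 Sigma(A)) *)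
Definition info_gain (D A : seq X) : R :=
  2^-1 * ln (\det (1%:M + lam^-1 *: post_cov_mx D A)).

End BTSRED.

Definition data_before (X : Type) (x : nat -> nat -> X) (bt : nat -> nat)
    (t : nat) : seq X :=
  flatten [seq [seq x t' b | b <- iota 1 (bt t')] | t' <- iota 1 t.-1].

Definition batch (X : Type) (x : nat -> nat -> X) (bt : nat -> nat) (t : nat)
  : seq X := [seq x t b | b <- iota 1 (bt t)].

(* Main.v *)
Require Import Defs.
From HB Require Import structures.
From mathcomp Require Import all_boot all_order all_algebra.
From mathcomp Require Import reals sequences exp.
From mathcomp Require Import all_classical all_reals all_analysis.
From mathcomp Require Import ring lra.
Import Order.TTheory GRing.Theory Num.Theory.
Import numFieldNormedType.Exports.
Local Open Scope ring_scope.

Definition psd {R : realFieldType} {n} (S : 'M[R]_n) := forall v : 'rV_n, 0 <= (v *m S *m v^T) 0 0.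
Section L3.
Variable R : realFieldType.

Lemma qf_block n (A : 'M[R]_1) (B : 'M[R]_(1, n)) (Cm : 'M[R]_(n, 1)) (D : 'M[R]_n) (p : 'rV_1) (v : 'rV_n) :
  (row_mx p v *m block_mx A B Cm D *m (row_mx p v)^T) =
  p *m A *m p^T + v *m Cm *m p^T + p *m B *m v^T + v *m D *m v^T.
Proof.
by rewrite mul_row_block tr_row_mx mul_row_col !mulmxDl addrA.
Qed.

Lemma mx11_mul (A B : 'M[R]_1) : (A *m B) 0 0 = A 0 0 * B 0 0.
Proof. by rewrite mxE big_ord1. Qed.

Lemma mx11_tr (A : 'M[R]_1) : A^T 0 0 = A 0 0.
Proof. by rewrite mxE. Qed.

Lemma det_tr_bound n (S : 'M[R]_n) : S^T = S -> psd S -> 1 + \tr S <= \det (1%:M + S : 'M[R]_n).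
Proof.
elim: n S => [|n IH] S sym pS.
  by rewrite det_mx00 /mxtrace big_ord0 addr0.
pose a := ulsubmx (S : 'M[R]_(1 + n)) 0 0.
pose w := dlsubmx (S : 'M[R]_(1 + n)).
pose S' := drsubmx (S : 'M[R]_(1 + n)).
have hB : ursubmx (S : 'M[R]_(1 + n)) = w^T by rewrite /w trmx_dlsub sym.
have hS' : S'^T = S' by rewrite /S' trmx_drsub sym.
have hA : ulsubmx (S : 'M[R]_(1 + n)) = a%:M by rewrite [LHS]mx11_scalar.
have eS : (S : 'M[R]_(1+n)) = block_mx a%:M w^T w S' by rewrite -hA -hB submxK.
change (1 + @mxtrace R (1 + n)%N S <= \det ((1%:M : 'M[R]_(1 + n)) + S)).
change (@psd R (1 + n)%N S) in pS.
rewrite eS in pS *.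
clearbody a w S'; clear eS hA hB sym S.
pose beta (v : 'rV_n) := (v *m w) 0 0.
pose q (v : 'rV_n) := (v *m S' *m v^T) 0 0.
have key c v : 0 <= c ^+ 2 * a + 2 * c * beta v + q v.
  have := pS (row_mx c%:M v); rewrite qf_block tr_scalar_mx !mul_scalar_mx !mul_mx_scalar -scalemxAl -trmx_mul.
  rewrite /beta /q; set t1 := v *m w; set t2 := v *m S' *m v^T.
  rewrite !mxE eqxx /= mulr1n.
  set X := \sum_(j < n) v 0 j * w j 0; set Y := \sum_(j < n) (v *m S') 0 j * v^T j 0.
  by move=> h; rewrite (_ : _ + _ + Y = c * (c * a) + c * X + c * X + Y) //; ring.
have a0 : 0 <= a.
  have := key 1 0; rewrite /beta /q !mul0mx !mxE expr1n mul1r mulr0 !addr0 //.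
have q0 v : 0 <= q v by have := key 0 v; rewrite !(expr0n, mul0r, mulr0, add0r, mulr0n) /=.
pose T := S' - (1+a)^-1 *: (w *m w^T).
have a1 : 0 < 1 + a by rewrite ltr_pwDl.
have hT : T^T = T by rewrite /T linearB /= hS' linearZ /= trmx_mul trmxK.
have qT v : (v *m T *m v^T) 0 0 = q v - (1+a)^-1 * beta v ^+ 2.
  rewrite /T mulmxBr mulmxBl -scalemxAr -scalemxAl.
  set P1 := v *m S' *m v^T; set P2 := v *m (w *m w^T) *m v^T.
  have E : P2 0 0 = beta v ^+ 2.
    by rewrite /P2 mulmxA -mulmxA -trmx_mul mx11_mul mx11_tr expr2.
  rewrite -E /q -/P1 /P1 /P2 !mxE //.
have pT : psd T.
  move=> v; rewrite qT.
  have := key (- (beta v / (1 + a))) v.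
  set u := beta v / (1 + a).
  have hb : beta v = u * (1 + a) by rewrite /u divfK // gt_eqF.
  rewrite hb (_ : (1 + a)^-1 * _ = u ^+ 2 * (1 + a)); last first.
    by field; rewrite gt_eqF.
  move: (q v) => Q h; nra.
have hwi i : w i 0 ^+ 2 <= a * S' i i.
  have := key^~ (delta_mx 0 i).
  rewrite /beta /q -rowE mxE -rowE trmx_delta -colE !mxE.
  move: (w i 0) (S' i i) => b s h.
  have s0 : 0 <= s by have := h 0; rewrite !(expr0n, mul0r, mulr0, add0r, mulr0n) /=.
  have [az|ap] := eqVneq a 0.
    rewrite az in h *.
    have [->|bn] := eqVneq b 0; first by rewrite expr0n mul0r.
    have := h (- (s + 1) / (2 * b)).
    rewrite mulr0 add0r (_ : 2 * _ * b = - (s + 1)); first by lra.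
    by field; rewrite bn.
  have ap' : 0 < a by rewrite lt_def ap a0.
  have := h (- (b / a)).
  have hb : b = (b / a) * a by rewrite divfK.
  move: (b / a) hb => u hb; rewrite hb => H; nra.
rewrite mxtrace_block mxtrace_scalar mulr1n.
have e1 : (1%:M : 'M[R]_(1+n)) + block_mx a%:M w^T w S' = block_mx (1+a)%:M w^T w (1%:M + S').
  rewrite (scalar_mx_block 1 n 1) add_block_mx !add0r; congr block_mx.
  by apply/matrixP=> i j; rewrite !mxE mulrnDl.
rewrite e1.
pose E := block_mx (1%:M : 'M[R]_1) 0 (- ((1+a)^-1 *: w)) (1%:M : 'M[R]_n).
have dE : \det E = 1 by rewrite det_lblock !det1 mulr1.
have eM : E *m block_mx (1+a)%:M w^T w (1%:M + S') = block_mx (1+a)%:M w^T 0 (1%:M + T).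
  rewrite mulmx_block !mul1mx !mul0mx !addr0; congr block_mx.
    by rewrite mul_mx_scalar scalerN scalerA mulfV ?gt_eqF // scale1r addNr.
  by rewrite /T mulNmx -scalemxAl addrC -addrA.
have -> : \det (block_mx (1+a)%:M w^T w (1%:M + S')) = (1 + a) * \det (1%:M + T).
  by have := congr1 determinant eM; rewrite det_mulmx dE mul1r det_ublock det_scalar1.
have := IH T hT pT.
have trT : \tr T = \tr S' - (1 + a)^-1 * \sum_i w i 0 ^+ 2.
  rewrite /T linearB /= mxtraceZ mxtrace_mulC; congr (_ - _ * _).
  by rewrite /mxtrace big_ord1 mxE; apply: eq_bigr => i _; rewrite !mxE expr2.
have hs : \sum_i w i 0 ^+ 2 <= a * \tr S'.
  by rewrite /mxtrace mulr_sumr; apply: ler_sum => i _.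
rewrite trT; move: (\det _) (\tr S') (\sum_i _) hs => dd t sg hs.
have hz : (1 + a) * ((1 + a)^-1 * sg) = sg by rewrite mulrA mulfV ?gt_eqF // mul1r.
move: ((1 + a)^-1 * sg) hz => z hz h; nra.
Qed.

End L3.

Section L1.
Local Open Scope classical_set_scope.
Variable R : realType.

Lemma expR_cvg (z : R) : series (exp_coeff z) @ \oo --> expR z.
Proof. exact: is_cvg_series_exp_coeff. Qed.

Lemma cvg_bigsum (I : Type) (r : seq I) (f : I -> nat -> R) (l : I -> R) :
  (forall i, f i @ \oo --> l i) ->
  (fun N => \sum_(i <- r) f i N) @ \oo --> \sum_(i <- r) l i.
Proof.
move=> h; elim: r => [|a r IH].
  rewrite big_nil; under eq_fun do rewrite big_nil; exact: cvg_cst.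
rewrite big_cons; under eq_fun do rewrite big_cons.
exact: cvgD.
Qed.


Lemma psd_pow n d m (c : 'I_n -> R) (a : 'I_n -> 'I_d -> R) :
  0 <= \sum_i \sum_j c i * c j * (\sum_l a i l * a j l) ^+ m.
Proof.
pose P i (f : {ffun 'I_m -> 'I_d}) := \prod_r a i (f r).
have E i j : (\sum_l a i l * a j l) ^+ m = \sum_f P i f * P j f.
  rewrite -[m in LHS]card_ord -prodr_const bigA_distr_bigA /=.
  by apply: eq_bigr => f _; rewrite /P -big_split.
under eq_bigr do under eq_bigr do rewrite E mulr_sumr.
have -> : \sum_i \sum_j \sum_f c i * c j * (P i f * P j f) =
          \sum_f (\sum_i c i * P i f) * (\sum_j c j * P j f).
  rewrite exchange_big /=; under eq_bigr do rewrite exchange_big /=.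
  rewrite exchange_big /=; apply: eq_bigr => f _.
  rewrite mulr_suml; apply: eq_bigr => i _; rewrite mulr_sumr.
  by apply: eq_bigr => j _; ring.
by apply: sumr_ge0 => f _; rewrite -expr2 sqr_ge0.
Qed.

Lemma psd_exp n d (c : 'I_n -> R) (a : 'I_n -> 'I_d -> R) :
  0 <= \sum_i \sum_j c i * c j * expR (\sum_l a i l * a j l).
Proof.
set z := fun i j => \sum_l a i l * a j l.
pose u N := \sum_i \sum_j c i * c j * series (exp_coeff (z i j)) N.
have hu : u @ \oo --> \sum_i \sum_j c i * c j * expR (z i j).
  apply: cvg_bigsum => i; apply: cvg_bigsum => j.
  exact: cvgMl_tmp (expR_cvg _).
rewrite -(cvg_lim _ hu) //; apply: limr_ge; first exact: cvgP hu.
apply: nearW => N; rewrite /u.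
have -> : \sum_i \sum_j c i * c j * series (exp_coeff (z i j)) N =
  \sum_(0 <= k < N) (k`!%:R)^-1 * \sum_i \sum_j c i * c j * (z i j) ^+ k.
  rewrite /series /=.
  under eq_bigr do under eq_bigr do rewrite mulr_sumr.
  under eq_bigr do rewrite exchange_big /=.
  rewrite exchange_big /=; apply: eq_bigr => k _.
  rewrite mulr_sumr; apply: eq_bigr => i _; rewrite mulr_sumr; apply: eq_bigr => j _.
  rewrite /exp_coeff /=; ring.
apply: sumr_ge0 => k _; apply: mulr_ge0; first by rewrite invr_ge0.
exact: psd_pow.
Qed.

End L1.

Section L4.
Variable R : realType.

Lemma qf_sum n (K : 'M[R]_n) (c : 'rV_n) :
  (c *m K *m c^T) 0 0 = \sum_i \sum_j c 0 i * c 0 j * K i j.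
Proof.
rewrite mxE; under eq_bigr do rewrite !mxE mulr_suml.
rewrite exchange_big /=; apply: eq_bigr => i _; apply: eq_bigr => j _; ring.
Qed.

Lemma se_decomp (X : finType) d (emb : X -> 'rV[R]_d) ell (ell0 : ell != 0) x y :
  se_kernel emb ell x y =
  expR (- (\sum_l (emb x 0 l / ell) ^+ 2) / 2) * expR (- (\sum_l (emb y 0 l / ell) ^+ 2) / 2)
  * expR (\sum_l (emb x 0 l / ell) * (emb y 0 l / ell)).
Proof.
rewrite /se_kernel -!expRD; congr expR.
set s1 := \sum_(i < d) _; set s2 := \sum_l (emb x 0 l / ell) ^+ 2.
set s3 := \sum_l (emb y 0 l / ell) ^+ 2; set s4 := \sum_l _ * _.
have hs : s1 = ell ^+ 2 * (s2 + s3 - 2 * s4).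
  rewrite /s2 /s3 /s4 mulr_sumr -sumrN -!big_split /= mulr_sumr.
  by apply: eq_bigr => l _; field.
by rewrite hs; field.
Qed.

Lemma se_sym (X : finType) d (emb : X -> 'rV[R]_d) ell x y :
  se_kernel emb ell x y = se_kernel emb ell y x.
Proof.
rewrite /se_kernel.
have -> : \sum_(i < d) (emb x 0 i - emb y 0 i) ^+ 2 = \sum_(i < d) (emb y 0 i - emb x 0 i) ^+ 2.
  by apply: eq_bigr => l _; rewrite -sqrrN opprB.
by [].
Qed.


Lemma se_psd (X : finType) d (emb : X -> 'rV[R]_d) ell (ell0 : ell != 0) n (p : 'I_n -> X) :
  psd (\matrix_(i, j) se_kernel emb ell (p i) (p j)).
Proof.
move=> c; rewrite qf_sum.
under eq_bigr do under eq_bigr do rewrite mxE se_decomp //.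
set g := fun x => expR (- (\sum_l (emb x 0 l / ell) ^+ 2) / 2).
have := @psd_exp R _ _ (fun i => c 0 i * g (p i)) (fun i l => emb (p i) 0 l / ell).
congr (_ <= _); apply: eq_bigr => i _; apply: eq_bigr => j _; rewrite /g; ring.
Qed.

End L4.

Section L2.
Variables (R : realType) (X : finType) (k : X -> X -> R) (lam : R).
Hypothesis ksym : forall x y, k x y = k y x.
Hypothesis kpsd : forall n (p : 'I_n -> X), psd (\matrix_(i, j) k (p i) (p j)).
Hypothesis lam0 : 0 < lam.

Lemma e00D m n (A B : 'M[R]_(m, n)) i j : (A + B) i j = A i j + B i j.
Proof. by rewrite mxE. Qed.
Lemma e00N m n (A : 'M[R]_(m, n)) i j : (- A) i j = - A i j.
Proof. by rewrite mxE. Qed.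
Lemma e00Z m n (a : R) (A : 'M[R]_(m, n)) i j : (a *: A) i j = a * A i j.
Proof. by rewrite mxE. Qed.

Lemma qf_blockG n1 n2 (A : 'M[R]_n1) (B : 'M[R]_(n1, n2)) (Cm : 'M[R]_(n2, n1)) (D : 'M[R]_n2) (p : 'rV_n1) (v : 'rV_n2) :
  (row_mx p v *m block_mx A B Cm D *m (row_mx p v)^T) =
  p *m A *m p^T + v *m Cm *m p^T + p *m B *m v^T + v *m D *m v^T.
Proof. by rewrite mul_row_block tr_row_mx mul_row_col !mulmxDl addrA. Qed.

Lemma sq_ge0 {n} (u : 'rV[R]_n) : 0 <= (u *m u^T) 0 0.
Proof. by rewrite mxE sumr_ge0 // => i _; rewrite mxE -expr2 sqr_ge0. Qed.

Lemma sq_gt0 {n} (u : 'rV[R]_n) : u != 0 -> 0 < (u *m u^T) 0 0.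
Proof.
move=> un; rewrite lt_def sq_ge0 andbT; apply/negP => /eqP.
rewrite mxE => E; apply/negP: un; rewrite negbK; apply/eqP/rowP => i.
have H j : 0 <= u 0 j * u^T j 0 by rewrite mxE -expr2 sqr_ge0.
have /eqP := psumr_eq0P (fun j _ => H j) E (i := i) isT.
by rewrite mxE -expr2 sqrf_eq0 mxE => /eqP.
Qed.

Variables (D A : seq X).
Let tD := tnth (in_tuple D).
Let tA := tnth (in_tuple A).
Let M := gram k D + lam%:M.
Let KAD := \matrix_(i < size A, l < size D) k (tA i) (tD l).
Let KDA := \matrix_(l < size D, j < size A) k (tD l) (tA j).
Let KAA := gram k A.

Lemma M_sym : M^T = M.
Proof. by rewrite /M linearD /= tr_scalar_mx; congr (_ + _); apply/matrixP => i j; rewrite !mxE ksym. Qed.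

Lemma M_unit : M \in unitmx.
Proof.
rewrite unitmxE unitfE; apply/negP => /det0P [v vn vM].
have h : 0 <= (v *m gram k D *m v^T) 0 0 := kpsd _ tD v.
have : (v *m M *m v^T) 0 0 = 0 by rewrite vM mul0mx mxE.
rewrite /M mulmxDr mulmxDl e00D mul_mx_scalar -scalemxAl e00Z.
have := sq_gt0 v vn => h2 h3.
have h4 := mulr_gt0 lam0 h2; move: h h3 h4.
move: ((v *m gram k D *m v^T) 0 0) (lam * (v *m v^T) 0 0) => a b; lra.
Qed.


Lemma Minv_sym : (invmx M)^T = invmx M.
Proof. by rewrite trmx_inv M_sym. Qed.

Lemma KAD_tr : KAD^T = KDA.
Proof. by apply/matrixP => i j; rewrite !mxE ksym. Qed.

Lemma post_mx_eq : post_cov_mx k lam D A = KAA - KAD *m invmx M *m KDA.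
Proof.
apply/matrixP => i j; rewrite !mxE /post_cov; congr (_ - _).
rewrite !mxE; apply: eq_bigr => l _; rewrite !mxE; congr (_ * _).
by apply: eq_bigr => l' _; rewrite !mxE.
Qed.

Let pfull (i : 'I_(size D + size A)) : X :=
  match fintype.split i with inl l => tD l | inr j => tA j end.

Lemma eK : \matrix_(i, j) k (pfull i) (pfull j) = block_mx (gram k D) KDA KAD KAA.
Proof.
rewrite -[LHS]submxK; congr block_mx; apply/matrixP => i j; rewrite !mxE /pfull.
- by rewrite (unsplitK (inl i)) (unsplitK (inl j)).
- by rewrite (unsplitK (inl i)) (unsplitK (inr j)).
- by rewrite (unsplitK (inr i)) (unsplitK (inl j)).
- by rewrite (unsplitK (inr i)) (unsplitK (inr j)).
Qed.

Lemma post_psd : psd (post_cov_mx k lam D A).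
Proof.
move=> v; rewrite post_mx_eq.
set Minv := invmx M; set g := v *m KAD; set u := g *m Minv.
have hfull := kpsd _ pfull (row_mx (- u) v).
rewrite /psd eK qf_blockG in hfull.
have gT : g^T = KDA *m v^T by rewrite /g trmx_mul KAD_tr.
have uT : u^T = Minv *m g^T by rewrite /u trmx_mul Minv_sym.
have eG : gram k D = M - lam%:M by rewrite /M addrK.
have uM : u *m M = g by rewrite /u /Minv mulmxKV // M_unit.
set P := g *m Minv *m g^T; set Q := u *m u^T; set W := v *m KAA *m v^T.
have e1 : - u *m gram k D *m (- u)^T = P - lam *: Q.
  rewrite linearN /= mulmxN mulNmx mulNmx opprK eG mulmxBr mulmxBl uM mul_mx_scalar -scalemxAl.
  by rewrite {1}uT mulmxA.
have e2 : v *m KAD *m (- u)^T = - P.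
  by rewrite -/g linearN /= mulmxN uT mulmxA.
have e3 : - u *m KDA *m v^T = - P.
  by rewrite mulNmx -mulmxA mulNmx -!mulmxA -gT /P !mulmxA.
have e4 : v *m (KAA - KAD *m Minv *m KDA) *m v^T = W - P.
  by rewrite mulmxBr mulmxBl /P gT !mulmxA.
rewrite e1 e2 e3 -/W in hfull; rewrite e4.
have hQ : 0 <= Q 0 0 by exact: sq_ge0.
move: hfull; rewrite !(e00D, e00N, e00Z).
move: (P 0 0) (W 0 0) (Q 0 0) hQ => p w q hQ h.
move: h (mulr_ge0 (ltW lam0) hQ); move: (lam * q) => lq; lra.
Qed.

Lemma post_sym : (post_cov_mx k lam D A)^T = post_cov_mx k lam D A.
Proof.
rewrite post_mx_eq linearB /= !trmx_mul Minv_sym KAD_tr mulmxA.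
have -> : KDA^T = KAD by rewrite -KAD_tr trmxK.
by congr (_ - _); apply/matrixP => i j; rewrite !mxE ksym.
Qed.

End L2.

Section N.
Variable R : realType.

Lemma cs_sqrt m (s : 'I_m -> R) : (forall i, 0 <= s i) ->
  \sum_i Num.sqrt (s i) <= Num.sqrt (m%:R * \sum_i s i).
Proof.
move=> s0; set a := fun i => Num.sqrt (s i).
have ea : \sum_i s i = \sum_i a i ^+ 2 by apply: eq_bigr => i _; rewrite sqr_sqrtr.
have a0 : 0 <= \sum_i a i by apply: sumr_ge0 => i _; exact: sqrtr_ge0.
rewrite -[X in X <= _](ger0_norm a0) -sqrtr_sqr; apply: ler_wsqrtr.
case: m s s0 a ea a0 => [|m] s s0 a ea a0.
  by rewrite !big_ord0 mul0r expr2 mulr0.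
set S1 := \sum_i a i; set S2 := \sum_i a i ^+ 2.
set mu := S1 / m.+1%:R.
have hm : m.+1%:R * mu = S1 by rewrite /mu mulrC divfK // pnatr_eq0.
have h : 0 <= \sum_i (a i - mu) ^+ 2 by apply: sumr_ge0 => i _; exact: sqr_ge0.
have E : \sum_i (a i - mu) ^+ 2 = S2 - (S1 * mu) *+ 2 + m.+1%:R * mu ^+ 2.
  under eq_bigr do rewrite sqrrB.
  rewrite big_split /= sumrB /= sumrMnl -mulr_suml sumr_const card_ord mulr_natl.
  by [].
rewrite E in h.
have mpos : 0 < m.+1%:R :> R by [].
rewrite -/S1 -/S2 ea -/S2; move: hm h mpos; rewrite mulr2n.
move: (m.+1%:R) => M hm h mpos; nra.
Qed.

Lemma final_num (lam y tr C m : R) : 1 <= lam -> 0 <= tr -> 1 + lam^-1 * tr <= y ->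
  2^-1 * ln y <= C -> 0 <= m ->
  Num.sqrt (m * tr) <= expR C * Num.sqrt (2 / ln (1 + lam^-1) * m * (2^-1 * ln y)).
Proof.
move=> lam1 tr0 hy hC m0.
have lam0 : 0 < lam by lra.
have il0 : 0 < lam^-1 by rewrite invr_gt0.
have y1 : 1 <= y by have := mulr_ge0 (ltW il0) tr0; lra.
have y0 : 0 < y by lra.
set ly := ln y; set L := ln (1 + lam^-1); set E := expR C.
have ly0 : 0 <= ly by exact: ln_ge0.
have L0 : 0 < L by apply: ln_gt0; lra.
have LL : L <= lam^-1 by apply: le_ln1Dx; lra.
have lamL : lam * L <= 1.
  by have := ler_wpM2l (ltW lam0) LL; rewrite mulfV ?gt_eqF.
have hC2 : ly <= C + C.
  have := ler_wpM2l (ler0n R 2) hC; rewrite -/ly mulrA mulfV ?pnatr_eq0 // mul1r; lra.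
have E2 : y <= E ^+ 2.
  rewrite /E expr2 -expRD -[X in X <= _](lnK (y0 : y \in Num.pos)) ler_expR -/ly; lra.
have h1 : tr <= lam * (y - 1).
  have := ler_wpM2l (ltW lam0) hy; rewrite mulrDr mulrA mulfV ?gt_eqF // mul1r; lra.
have h2 : y - 1 <= y * ly.
  have yi0 : 0 < y^-1 by rewrite invr_gt0.
  have := @le_ln1Dx R (y^-1 - 1).
  rewrite (_ : 1 + (y^-1 - 1) = y^-1); last by ring.
  rewrite lnV ?posrE // -/ly => /(_ ltac:(lra)) h.
  have := ler_wpM2l (ltW y0) h; rewrite mulrBr mulfV ?gt_eqF // mulr1 mulrN; lra.
have E0 : 0 <= E by exact: expR_ge0.
rewrite -[E](@ger0_norm _ E) // -sqrtr_sqr -sqrtrM ?sqr_ge0 //; apply: ler_wsqrtr.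
have -> : E ^+ 2 * (2 / L * m * (2^-1 * ly)) = m * (E ^+ 2 * ly / L).
  by field; rewrite gt_eqF.
apply: ler_wpM2l => //.
rewrite ler_pdivlMr //.
apply: (@le_trans _ _ (lam * (y * ly) * L)).
  have := ler_wpM2r (ltW L0) (le_trans h1 (ler_wpM2l (ltW lam0) h2)).
  by [].
have yl0 : 0 <= y * ly by apply: mulr_ge0 => //; lra.
have a := ler_wpM2r yl0 lamL; have b := ler_wpM2r ly0 E2.
rewrite mul1r in a.
rewrite (_ : lam * (y * ly) * L = lam * L * (y * ly)); last by ring.
exact: le_trans a b.
Qed.

End N.

Theorem mainTheorem6
  (R : realType) (X : finType) (d : nat) (emb : X -> 'rV[R]_d) (ell : R)
  (noise : X -> R) (R2 C : R) (T budget : nat)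
  (x : nat -> nat -> X) (bt : nat -> nat) :
  injective emb -> 0 < ell ->
  (forall z, 0 < noise z) -> 0 < R2 -> (0 < T)%N ->
  let k := se_kernel emb ell in
  let lam := 1 + 2 / T%:R in
  (* number of replicates n_t^(b) = ceil(sigma^2(x_t^(b)) / R^2) *)
  let n := fun t b => `|Num.ceil (noise (x t b) / R2)|%N in
  (* stopping rule: b_t + 1 is the first b with sum_{b' <= b} n_t^(b') >= budget *)
  (forall t, (1 <= t)%N ->
     (forall b, (1 <= b <= bt t)%N -> (\sum_(1 <= b' < b.+1) n t b' < budget)%N)
     /\ (budget <= \sum_(1 <= b' < (bt t).+2) n t b')%N) ->
  (* C bounds the information gain of any list of at most budget inputs *)
  (forall t, (1 <= t)%N -> forall A : seq X, (size A <= budget)%N ->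
     info_gain k lam (data_before x bt t) A <= C) ->
  let C2 := 2 / ln (1 + lam^-1) in
  forall t, (1 <= t)%N ->
    \sum_(1 <= b < (bt t).+1) post_sd k lam (data_before x bt t) (x t b)
    <= expR C * Num.sqrt (C2 * (bt t)%:R
                           * info_gain k lam (data_before x bt t) (batch x bt t)).
Proof.
move=> embi ell0 noise0 R20 T0 k lam n hstop hC C2 t t1.
set D := data_before x bt t; set B := batch x bt t.
have lam1 : 1 <= lam by rewrite /lam lerDl divr_ge0.
have lam0 : 0 < lam by lra.
have ell0' : ell != 0 by rewrite gt_eqF.
have ksym : forall y z, k y z = k z y by move=> y z; exact: se_sym.
have kpsd : forall n0 (p : 'I_n0 -> X), psd (\matrix_(i, j) k (p i) (p j)).
  by move=> n0 p; exact: se_psd.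
pose Sig := post_cov_mx k lam D B.
have hP : psd Sig := @post_psd R X k lam ksym kpsd lam0 D B.
have hSy : Sig^T = Sig := @post_sym R X k lam ksym D B.
pose S := lam^-1 *: Sig.
have hS : S^T = S by rewrite /S linearZ /= hSy.
have pS : psd S.
  move=> v; rewrite /S -scalemxAr -scalemxAl e00Z; apply: mulr_ge0 => //.
  by rewrite invr_ge0 ltW.
have hdet := @det_tr_bound R _ S hS pS.
have sB : size B = bt t by rewrite /B /batch size_map size_iota.
have diag i : 0 <= Sig i i.
  have := hP (delta_mx 0 i); rewrite -rowE trmx_delta -colE !mxE.
  by [].
have hsize : (size B <= budget)%N.
  rewrite sB; have [hlt _] := hstop t t1.
  case E : (bt t) => [//|m].
  have := hlt m.+1; rewrite E leqnn /= => /(_ isT) hl.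
  apply: leq_trans (ltnW hl).
  have e : (\sum_(1 <= b' < m.+2) 1 = m.+1)%N by rewrite sum_nat_const_nat muln1 subn1.
  rewrite -{1}e; apply: leq_sum => b _; rewrite /n absz_gt0 gt_eqF // ceil_gt0 divr_gt0 //.
have hI : info_gain k lam D B <= C := hC t t1 B hsize.
have eL : \sum_(1 <= b < (bt t).+1) post_sd k lam D (x t b) =
          \sum_(i < size B) Num.sqrt (Sig i i).
  transitivity (\sum_(b <- B) post_sd k lam D b).
    by rewrite /B /batch big_map /index_iota subSS subn0.
  by rewrite big_tnth; apply: eq_bigr => i _; rewrite /Sig mxE.
rewrite eL.
apply: le_trans (@cs_sqrt R _ (fun i => Sig i i) diag) _.
have trS : \tr Sig = \sum_i Sig i i by [].
have hm : (size B)%:R = (bt t)%:R :> R by rewrite sB.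
rewrite -trS hm.
have tr0 : 0 <= \tr Sig by rewrite trS sumr_ge0.
apply: final_num => //.
by rewrite /S mxtraceZ in hdet.
Qed.
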